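(* Let $(r_I)_I$ be a family of idempotent functions $r_I:[0,1]^I\times[0,1]\to[0,1]^I\times[0,1]$ (one for each finite set of names $I$) satisfying (1) $r_I(u,z)=(u,z)$ iff $\partial_I u=1$ or $z=0$, and (2) $r_J(f\times\mathrm{id})r_I=r_J(f\times\mathrm{id})$ for every strict $f\in\mathrm{Hom}(I,J)$. Then there is a unique family of functions $r_\psi:[0,1]^I\times[0,1]\to[0,1]^I\times[0,1]$, indexed by finite sets of names $I$ and $\psi\in\mathbb{F}(I)$, such that: (a) $r_\psi=\mathrm{id}$ if $\psi=1_\mathbb{F}$; (b) $r_\psi=r_\psi\circ r_I$ if $\psi\neq 1_\mathbb{F}$; (c) $r_\psi(u,z)=(u,z)$ if $z=0$; (d) $r_\psi\circ((ib)\times\mathrm{id})=((ib)\times\mathrm{id})\circ r_{\psi(ib)}$ for all $i\in I$, $b\in\{0,1\}$. Moreover each $r_\psi$ is idempotent and its fixed points are exactly the $(u,z)$ with $\psi u=1$ or $z=0$.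
   Context: Fix a countably infinite set of names. $\mathsf{dM}(J)$ is the free de Morgan algebra on $J$. The cube category $\mathcal{C}$ has finite sets of names as objects; $f\in\mathrm{Hom}(I,J)$ is a map $J\to\mathsf{dM}(I)$, composed by substitution; $f$ is strict if it never takes value $0$ or $1$. Using the de Morgan algebra $([0,1],\min,\max,1-x)$, $f\in\mathrm{Hom}(I,J)$ induces $f:[0,1]^I\to[0,1]^J$, $(fu)_j=f(j)$ evaluated at $u$. For $i\in I$ and $b\in\{0,1\}$, the face map $(ib)\in\mathrm{Hom}(I-\{i\},I)$ sends $i\mapsto b$ and $j\mapsto j$ otherwise; it induces $[0,1]^{I-\{i\}}\to[0,1]^I$ inserting the value $b$ at coordinate $i$. The face lattice $\mathbb{F}$ is the distributive lattice generated by $(i=0),(i=1)$ for names $i$ subject to $(i=0)\wedge(i=1)=0_\mathbb{F}$; $\mathbb{F}(I)$ is the sublattice generated by generators with $i\in I$. For $\psi\in\mathbb{F}(I)$ and $u\in[0,1]^I$, the truth value $\psi u$ is computed by interpreting $(i=0)$ as ''$u_i=0$'', $(i=1)$ as ''$u_i=1$'', $\wedge,\vee$ as conjunction/disjunction. $\psi(ib)\in\mathbb{F}(I-\{i\})$ is obtained by substituting $(i=b)\mapsto1_\mathbb{F}$, $(i=1-b)\mapsto 0_\mathbb{F}$. $\partial_I=\bigvee_{i\in I}((i=0)\vee(i=1))$, so $\partial_I u=1$ iff some $u_i\in\{0,1\}$. *)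

(* Defs.v *)
From Stdlib Require Import Reals List Sorted Arith.
Import ListNotations.
Open Scope R_scope.

(* Names are natural numbers. A finite set of names I is represented
   canonically by a strictly increasing list (so set equality = list equality). *)
Definition names_set (I : list nat) : Prop := StronglySorted lt I.

Definition remove_name (i : nat) (I : list nat) : list nat :=
  filter (fun j => negb (Nat.eqb j i)) I.

Inductive dm : Type :=
| dvar : nat -> dm
| dbot : dm
| dtop : dm
| dmeet : dm -> dm -> dm
| djoin : dm -> dm -> dm
| dneg : dm -> dm.

Inductive dm_eq : dm -> dm -> Prop :=
| dme_refl x : dm_eq x x
| dme_sym x y : dm_eq x y -> dm_eq y x
| dme_trans x y z : dm_eq x y -> dm_eq y z -> dm_eq x z
| dme_meet x x' y y' : dm_eq x x' -> dm_eq y y' -> dm_eq (dmeet x y) (dmeet x' y')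
| dme_join x x' y y' : dm_eq x x' -> dm_eq y y' -> dm_eq (djoin x y) (djoin x' y')
| dme_neg x x' : dm_eq x x' -> dm_eq (dneg x) (dneg x')
| dme_meetA x y z : dm_eq (dmeet x (dmeet y z)) (dmeet (dmeet x y) z)
| dme_joinA x y z : dm_eq (djoin x (djoin y z)) (djoin (djoin x y) z)
| dme_meetC x y : dm_eq (dmeet x y) (dmeet y x)
| dme_joinC x y : dm_eq (djoin x y) (djoin y x)
| dme_meetI x : dm_eq (dmeet x x) x
| dme_joinI x : dm_eq (djoin x x) x
| dme_absMJ x y : dm_eq (dmeet x (djoin x y)) x
| dme_absJM x y : dm_eq (djoin x (dmeet x y)) x
| dme_distr x y z : dm_eq (dmeet x (djoin y z)) (djoin (dmeet x y) (dmeet x z))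
| dme_meet1 x : dm_eq (dmeet x dtop) x
| dme_join0 x : dm_eq (djoin x dbot) x
| dme_negneg x : dm_eq (dneg (dneg x)) x
| dme_negmeet x y : dm_eq (dneg (dmeet x y)) (djoin (dneg x) (dneg y))
| dme_negjoin x y : dm_eq (dneg (djoin x y)) (dmeet (dneg x) (dneg y))
| dme_neg0 : dm_eq (dneg dbot) dtop
| dme_neg1 : dm_eq (dneg dtop) dbot.

Fixpoint dm_in (I : list nat) (t : dm) : Prop :=
  match t with
  | dvar i => In i I
  | dbot | dtop => True
  | dmeet a b | djoin a b => dm_in I a /\ dm_in I b
  | dneg a => dm_in I a
  end.

Fixpoint dm_eval (u : nat -> R) (t : dm) : R :=
  match t with
  | dvar i => u i
  | dbot => 0
  | dtop => 1
  | dmeet a b => Rmin (dm_eval u a) (dm_eval u b)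
  | djoin a b => Rmax (dm_eval u a) (dm_eval u b)
  | dneg a => 1 - dm_eval u a
  end.

(* f in Hom(I,J): a map J -> dM(I) (values outside J are irrelevant) *)
Definition is_hom (I J : list nat) (f : nat -> dm) : Prop :=
  forall j, In j J -> dm_in I (f j).

Definition is_strict (J : list nat) (f : nat -> dm) : Prop :=
  forall j, In j J -> ~ dm_eq (f j) dbot /\ ~ dm_eq (f j) dtop.

(* ---------- points of [0,1]^I x [0,1] ----------
   A point of [0,1]^I is represented by u : nat -> R with u_i in [0,1]
   for i in I and u_i = 0 for i not in I (canonical representative). *)
Definition pt : Type := ((nat -> R) * R)%type.

Definition in_cube (I : list nat) (u : nat -> R) : Prop :=
  (forall i, In i I -> 0 <= u i <= 1) /\ (forall i, ~ In i I -> u i = 0).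

Definition in_space (I : list nat) (p : pt) : Prop :=
  in_cube I (fst p) /\ 0 <= snd p <= 1.

Definition hom_map (J : list nat) (f : nat -> dm) (p : pt) : pt :=
  (fun j => if in_dec Nat.eq_dec j J then dm_eval (fst p) (f j) else 0, snd p).

Definition face_map (i : nat) (b : bool) (p : pt) : pt :=
  (fun j => if Nat.eqb j i then (if b then 1 else 0) else fst p j, snd p).

Definition boundary (I : list nat) (u : nat -> R) : Prop :=
  exists i, In i I /\ (u i = 0 \/ u i = 1).

Inductive face : Type :=
| feq0 : nat -> face
| feq1 : nat -> face
| fbot : face
| ftop : face
| fmeet : face -> face -> face
| fjoin : face -> face -> face.

Inductive face_eq : face -> face -> Prop :=
| fe_refl x : face_eq x x
| fe_sym x y : face_eq x y -> face_eq y x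
| fe_trans x y z : face_eq x y -> face_eq y z -> face_eq x z
| fe_meet x x' y y' : face_eq x x' -> face_eq y y' -> face_eq (fmeet x y) (fmeet x' y')
| fe_join x x' y y' : face_eq x x' -> face_eq y y' -> face_eq (fjoin x y) (fjoin x' y')
| fe_meetA x y z : face_eq (fmeet x (fmeet y z)) (fmeet (fmeet x y) z)
| fe_joinA x y z : face_eq (fjoin x (fjoin y z)) (fjoin (fjoin x y) z)
| fe_meetC x y : face_eq (fmeet x y) (fmeet y x)
| fe_joinC x y : face_eq (fjoin x y) (fjoin y x)
| fe_meetI x : face_eq (fmeet x x) x
| fe_joinI x : face_eq (fjoin x x) x
| fe_absMJ x y : face_eq (fmeet x (fjoin x y)) x
| fe_absJM x y : face_eq (fjoin x (fmeet x y)) x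
| fe_distr x y z : face_eq (fmeet x (fjoin y z)) (fjoin (fmeet x y) (fmeet x z))
| fe_meet1 x : face_eq (fmeet x ftop) x
| fe_join0 x : face_eq (fjoin x fbot) x
| fe_excl i : face_eq (fmeet (feq0 i) (feq1 i)) fbot.

Fixpoint face_in (I : list nat) (psi : face) : Prop :=
  match psi with
  | feq0 i | feq1 i => In i I
  | fbot | ftop => True
  | fmeet a b | fjoin a b => face_in I a /\ face_in I b
  end.

Fixpoint face_holds (psi : face) (u : nat -> R) : Prop :=
  match psi with
  | feq0 i => u i = 0
  | feq1 i => u i = 1
  | fbot => False
  | ftop => True
  | fmeet a b => face_holds a u /\ face_holds b u
  | fjoin a b => face_holds a u \/ face_holds b u
  end.

Fixpoint face_subst (i : nat) (b : bool) (psi : face) : face :=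
  match psi with
  | feq0 j => if Nat.eqb j i then (if b then fbot else ftop) else feq0 j
  | feq1 j => if Nat.eqb j i then (if b then ftop else fbot) else feq1 j
  | fbot => fbot
  | ftop => ftop
  | fmeet a b' => fmeet (face_subst i b a) (face_subst i b b')
  | fjoin a b' => fjoin (face_subst i b a) (face_subst i b b')
  end.

Definition good_r (r : list nat -> pt -> pt) : Prop :=
  (forall I p, names_set I -> in_space I p -> in_space I (r I p)) /\
  (forall I p, names_set I -> in_space I p -> r I (r I p) = r I p) /\
  (forall I p, names_set I -> in_space I p ->
     (r I p = p <-> boundary I (fst p) \/ snd p = 0)) /\
  (forall I J f p, names_set I -> names_set J -> is_hom I J f -> is_strict J f ->
     in_space I p -> r J (hom_map J f (r I p)) = r J (hom_map J f p)).

Definition psi_family (r : list nat -> pt -> pt) (rr : list nat -> face -> pt -> pt) : Prop :=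
  (forall I psi p, names_set I -> face_in I psi -> in_space I p ->
     in_space I (rr I psi p)) /\
  (* well defined on F(I), i.e. on equivalence classes of face terms *)
  (forall I psi psi' p, names_set I -> face_in I psi -> face_in I psi' ->
     face_eq psi psi' -> in_space I p -> rr I psi p = rr I psi' p) /\
  (forall I psi p, names_set I -> face_in I psi -> in_space I p ->
     face_eq psi ftop -> rr I psi p = p) /\
  (forall I psi p, names_set I -> face_in I psi -> in_space I p ->
     ~ face_eq psi ftop -> rr I psi p = rr I psi (r I p)) /\
  (forall I psi p, names_set I -> face_in I psi -> in_space I p ->
     snd p = 0 -> rr I psi p = p) /\
  (forall I psi i b p, names_set I -> face_in I psi -> In i I ->
     in_space (remove_name i I) p ->
     rr I psi (face_map i b p) =
     face_map i b (rr (remove_name i I) (face_subst i b psi) p)).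

(* Main.v *)
Require Import Defs.
From Stdlib Require Import Reals List Sorted Arith Lra Lia.
From Stdlib Require Import FunctionalExtensionality ClassicalDescription.
Import ListNotations.
Open Scope R_scope.

Definition bval (b : bool) : R := if b then 1 else 0.

Fixpoint find_bd (I : list nat) (u : nat -> R) : option (nat * bool) :=
  match I with
  | [] => None
  | i :: I' => if Req_EM_T (u i) 0 then Some (i, false)
               else if Req_EM_T (u i) 1 then Some (i, true)
               else find_bd I' u
  end.

Definition zero_at (j : nat) (p : pt) : pt :=
  (fun k => if Nat.eqb k j then 0 else fst p k, snd p).

Lemma find_bd_some I u j c : find_bd I u = Some (j, c) -> In j I /\ u j = bval c.
Proof.
  induction I as [|i I IH]; simpl; [discriminate|].
  destruct (Req_EM_T (u i) 0) as [e|e].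
  { intros H; inversion H; subst; simpl; auto. }
  destruct (Req_EM_T (u i) 1) as [e'|e'].
  { intros H; inversion H; subst; simpl; auto. }
  intros H; destruct (IH H); auto.
Qed.

Lemma find_bd_none I u : find_bd I u = None -> ~ boundary I u.
Proof.
  induction I as [|i I IH]; simpl.
  - intros _ [k [[] _]].
  - destruct (Req_EM_T (u i) 0) as [e|e]; [discriminate|].
    destruct (Req_EM_T (u i) 1) as [e'|e']; [discriminate|].
    intros H [k [[Hk|Hk] Hv]].
    + subst; tauto.
    + apply (IH H); exists k; auto.
Qed.

Lemma find_bd_bd I u : boundary I u -> exists j c, find_bd I u = Some (j, c).
Proof.
  intros Hb; destruct (find_bd I u) as [[j c]|] eqn:E; eauto.
  exfalso; exact (find_bd_none _ _ E Hb).
Qed.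

Lemma In_remove k i I : In k (remove_name i I) <-> In k I /\ k <> i.
Proof.
  unfold remove_name; rewrite filter_In.
  destruct (Nat.eqb_spec k i); simpl; intuition.
Qed.

Lemma remove_comm i j I : remove_name i (remove_name j I) = remove_name j (remove_name i I).
Proof.
  unfold remove_name; induction I as [|a I IH]; simpl; auto.
  destruct (Nat.eqb a j) eqn:E1; destruct (Nat.eqb a i) eqn:E2; simpl;
    rewrite ?E1, ?E2; simpl; rewrite IH; auto.
Qed.

Lemma remove_length i I : In i I -> (length (remove_name i I) < length I)%nat.
Proof.
  unfold remove_name; induction I as [|a I IH]; simpl; [tauto|].
  intros [H|H].
  - subst. rewrite Nat.eqb_refl; simpl.
    assert (length (filter (fun j => negb (Nat.eqb j i)) I) <= length I)%nat
      by apply filter_length_le. lia.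
  - specialize (IH H). destruct (negb (Nat.eqb a i)); simpl; lia.
Qed.

Lemma names_set_remove i I : names_set I -> names_set (remove_name i I).
Proof.
  unfold names_set; induction 1 as [|a I HI IH Ha]; simpl; [constructor|].
  destruct (negb (Nat.eqb a i)); auto.
  constructor; auto.
  rewrite Forall_forall in *. intros x Hx.
  apply Ha. unfold remove_name in Hx. apply filter_In in Hx; tauto.
Qed.

Lemma in_space_face i b I p : In i I -> in_space (remove_name i I) p ->
  in_space I (face_map i b p).
Proof.
  intros Hi [[H1 H2] H3]; split; [split|]; simpl; auto.
  - intros k Hk. destruct (Nat.eqb_spec k i).
    + destruct b; lra.
    + apply H1, In_remove; auto.
  - intros k Hk. destruct (Nat.eqb_spec k i).
    + subst; tauto.
    + apply H2. rewrite In_remove; tauto.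
Qed.

Lemma in_space_zero j I p : in_space I p -> in_space (remove_name j I) (zero_at j p).
Proof.
  intros [[H1 H2] H3]; split; [split|]; simpl; auto.
  - intros k Hk. apply In_remove in Hk. destruct (Nat.eqb_spec k j); [lra|]. apply H1; tauto.
  - intros k Hk. destruct (Nat.eqb_spec k j); auto. apply H2.
    intro; apply Hk, In_remove; auto.
Qed.

Lemma in_space_rem_0 j I p : in_space (remove_name j I) p -> fst p j = 0.
Proof.
  intros [[H1 H2] H3]. apply H2. rewrite In_remove; tauto.
Qed.

Lemma zero_face j c p : fst p j = 0 -> zero_at j (face_map j c p) = p.
Proof.
  destruct p as [u z]; simpl; intros H; unfold zero_at, face_map; simpl.
  f_equal; extensionality k. destruct (Nat.eqb_spec k j); subst; auto.
Qed.

Lemma face_zero j c p : fst p j = bval c -> face_map j c (zero_at j p) = p.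
Proof.
  destruct p as [u z]; simpl; intros H; unfold zero_at, face_map; simpl.
  f_equal; extensionality k. destruct (Nat.eqb_spec k j); subst; [|auto].
  rewrite H; destruct c; reflexivity.
Qed.

Lemma face_comm i b j c p : i <> j ->
  face_map i b (face_map j c p) = face_map j c (face_map i b p).
Proof.
  intros Hij; unfold face_map; simpl; f_equal; extensionality k.
  destruct (Nat.eqb_spec k i); destruct (Nat.eqb_spec k j); subst; auto; tauto.
Qed.

Lemma zero_face_comm i b j p : i <> j ->
  zero_at j (face_map i b p) = face_map i b (zero_at j p).
Proof.
  intros Hij; unfold face_map, zero_at; simpl; f_equal; extensionality k.
  destruct (Nat.eqb_spec k i); destruct (Nat.eqb_spec k j); subst; auto; tauto.
Qed.

Lemma face_map_snd i b p : snd (face_map i b p) = snd p.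
Proof. reflexivity. Qed.

Lemma face_map_at i b p : fst (face_map i b p) i = bval b.
Proof. simpl. rewrite Nat.eqb_refl. destruct b; reflexivity. Qed.

Lemma face_map_bd i b I p : In i I -> boundary I (fst (face_map i b p)).
Proof.
  intros Hi; exists i; split; auto. rewrite face_map_at; destruct b; simpl; auto.
Qed.

Lemma face_map_inj i b p p' : fst p i = 0 -> fst p' i = 0 ->
  face_map i b p = face_map i b p' -> p = p'.
Proof.
  intros H1 H2 H. rewrite <- (zero_face i b p), <- (zero_face i b p'), H; auto.
Qed.

Lemma face_subst_comm i b j c psi : i <> j ->
  face_subst i b (face_subst j c psi) = face_subst j c (face_subst i b psi).
Proof.
  intros Hij; induction psi; simpl; try congruence;
  destruct (Nat.eqb_spec n j); destruct (Nat.eqb_spec n i); subst; try tauto;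
  simpl; rewrite ?Nat.eqb_refl;
  repeat match goal with
  | H : ?a <> ?b |- _ => apply Nat.eqb_neq in H; rewrite ?H
  end; destruct b, c; simpl; auto.
Qed.

Lemma fe_top_join x : face_eq (fjoin ftop x) ftop.
Proof.
  eapply fe_trans; [| apply (fe_absJM ftop x)].
  apply fe_join; [apply fe_refl|].
  eapply fe_trans; [apply fe_sym, fe_meet1|apply fe_meetC].
Qed.

Lemma fe_bot_meet x : face_eq (fmeet fbot x) fbot.
Proof.
  eapply fe_trans; [| apply (fe_absMJ fbot x)].
  apply fe_meet; [apply fe_refl|].
  eapply fe_trans; [apply fe_sym, fe_join0|apply fe_joinC].
Qed.

Lemma face_subst_eq i b x y : face_eq x y -> face_eq (face_subst i b x) (face_subst i b y).
Proof.
  induction 1; simpl; try (econstructor; eauto; fail).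
  destruct (Nat.eqb i0 i); [|apply fe_excl].
  destruct b.
  - apply fe_bot_meet.
  - eapply fe_trans; [apply fe_meetC|]. apply fe_bot_meet.
Qed.

Lemma face_holds_eq x y u : face_eq x y -> (face_holds x u <-> face_holds y u).
Proof.
  induction 1; simpl; try tauto.
  split; [intros [H1 H2]; lra | tauto].
Qed.

Lemma face_subst_holds i b psi u :
  face_holds (face_subst i b psi) u <->
  face_holds psi (fun k => if Nat.eqb k i then (if b then 1 else 0) else u k).
Proof.
  induction psi; simpl; try tauto.
  - destruct (Nat.eqb n i); simpl; [destruct b; simpl; split; intros; try lra; auto|tauto].
  - destruct (Nat.eqb n i); simpl; [destruct b; simpl; split; intros; try lra; auto|tauto].
Qed.

Lemma face_in_subst I i b psi : face_in I psi -> face_in (remove_name i I) (face_subst i b psi).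
Proof.
  induction psi; simpl; try tauto;
  destruct (Nat.eqb_spec n i); [destruct b; simpl; auto| |destruct b; simpl; auto|];
  intros; apply In_remove; auto.
Qed.

Lemma face_interior I psi u : face_in I psi ->
  (forall k, In k I -> u k <> 0 /\ u k <> 1) -> face_holds psi u -> face_eq psi ftop.
Proof.
  intros Hin Hu; induction psi; simpl in *.
  - intros H; destruct (Hu n Hin); tauto.
  - intros H; destruct (Hu n Hin); tauto.
  - tauto.
  - intros; apply fe_refl.
  - intros [H1 H2]. eapply fe_trans.
    + apply fe_meet; [apply IHpsi1 | apply IHpsi2]; tauto.
    + apply fe_meetI.
  - intros [H|H].
    + eapply fe_trans; [apply fe_join; [apply IHpsi1; tauto|apply fe_refl]|]. apply fe_top_join.
    + eapply fe_trans; [apply fe_joinC|].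
      eapply fe_trans; [apply fe_join; [apply IHpsi2; tauto|apply fe_refl]|]. apply fe_top_join.
Qed.
Fixpoint rrn (r : list nat -> pt -> pt) (n : nat) (I : list nat) (psi : face) (p : pt) : pt :=
  match n with
  | O => p
  | S n' =>
    if excluded_middle_informative (face_eq psi ftop) then p else
    let q := r I p in
    if Req_EM_T (snd q) 0 then q else
    match find_bd I (fst q) with
    | Some (j, c) => face_map j c (rrn r n' (remove_name j I) (face_subst j c psi) (zero_at j q))
    | None => q
    end
  end.

Definition rrf r I psi p := rrn r (S (length I)) I psi p.

Lemma rrn_fuel r n : forall m I psi p, (length I < n)%nat -> (length I < m)%nat ->
  rrn r n I psi p = rrn r m I psi p.
Proof.
  induction n as [|n IH]; intros m I psi p Hn Hm; [lia|].
  destruct m as [|m]; [lia|]. simpl.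
  destruct (excluded_middle_informative (face_eq psi ftop)); auto.
  destruct (Req_EM_T (snd (r I p)) 0); auto.
  destruct (find_bd I (fst (r I p))) as [[j c]|] eqn:E; auto.
  apply find_bd_some in E. destruct E as [Hj _].
  pose proof (remove_length j I Hj).
  f_equal; apply IH; lia.
Qed.

Lemma rr_unfold r I psi p : rrf r I psi p =
  if excluded_middle_informative (face_eq psi ftop) then p else
    let q := r I p in
    if Req_EM_T (snd q) 0 then q else
    match find_bd I (fst q) with
    | Some (j, c) => face_map j c (rrf r (remove_name j I) (face_subst j c psi) (zero_at j q))
    | None => q
    end.
Proof.
  unfold rrf at 1; simpl.
  destruct (excluded_middle_informative (face_eq psi ftop)); auto.
  destruct (Req_EM_T (snd (r I p)) 0); auto.
  destruct (find_bd I (fst (r I p))) as [[j c]|] eqn:E; auto.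
  apply find_bd_some in E. destruct E as [Hj _].
  pose proof (remove_length j I Hj).
  f_equal; unfold rrf; apply rrn_fuel; lia.
Qed.


Section S.
Variable r : list nat -> pt -> pt.
Hypothesis Hr : good_r r.

Lemma Hsp I p : names_set I -> in_space I p -> in_space I (r I p).
Proof. destruct Hr as [H _]; auto. Qed.
Lemma Hidem I p : names_set I -> in_space I p -> r I (r I p) = r I p.
Proof. destruct Hr as [_ [H _]]; auto. Qed.
Lemma Hfix I p : names_set I -> in_space I p ->
     (r I p = p <-> boundary I (fst p) \/ snd p = 0).
Proof. destruct Hr as [_ [_ [H _]]]; auto. Qed.

Lemma len_ind (P : list nat -> Prop) :
  (forall I, (forall J, (length J < length I)%nat -> P J) -> P I) -> forall I, P I.
Proof.
  intros H. assert (forall n I, (length I < n)%nat -> P I).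
  { induction n; intros I HI; [lia|]. apply H. intros J HJ; apply IHn; lia. }
  intros I; apply (H0 (S (length I))); lia.
Qed.

Lemma rr_space : forall I psi p, names_set I -> in_space I p -> in_space I (rrf r I psi p).
Proof.
  induction I as [I IH] using len_ind; intros psi p HI Hp.
  rewrite rr_unfold.
  destruct (excluded_middle_informative (face_eq psi ftop)); auto. cbv zeta.
  destruct (Req_EM_T (snd (r I p)) 0); [apply Hsp; auto|].
  destruct (find_bd I (fst (r I p))) as [[j c]|] eqn:E; [|apply Hsp; auto].
  apply find_bd_some in E. destruct E as [Hj _].
  apply in_space_face; auto. apply IH.
  - apply remove_length; auto.
  - apply names_set_remove; auto.
  - apply in_space_zero, Hsp; auto.
Qed.

Lemma rr_wd : forall I psi psi' p, face_eq psi psi' -> rrf r I psi p = rrf r I psi' p.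
Proof.
  induction I as [I IH] using len_ind; intros psi psi' p He.
  rewrite (rr_unfold r I psi), (rr_unfold r I psi').
  destruct (excluded_middle_informative (face_eq psi ftop)) as [h1|h1];
  destruct (excluded_middle_informative (face_eq psi' ftop)) as [h2|h2]; auto.
  - exfalso; apply h2; eapply fe_trans; [apply fe_sym, He|auto].
  - exfalso; apply h1; eapply fe_trans; [apply He|auto].
  - cbv zeta. destruct (Req_EM_T (snd (r I p)) 0); auto.
    destruct (find_bd I (fst (r I p))) as [[j c]|] eqn:E; auto.
    apply find_bd_some in E. destruct E as [Hj _].
    f_equal. apply IH; [apply remove_length; auto|]. apply face_subst_eq; auto.
Qed.

Lemma rr_top I psi p : face_eq psi ftop -> rrf r I psi p = p.
Proof.
  intros H; rewrite rr_unfold.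
  destruct (excluded_middle_informative (face_eq psi ftop)); tauto.
Qed.

Lemma rr_b I psi p : names_set I -> in_space I p -> ~ face_eq psi ftop ->
  rrf r I psi p = rrf r I psi (r I p).
Proof.
  intros HI Hp H; rewrite (rr_unfold r I psi p), (rr_unfold r I psi (r I p)).
  rewrite Hidem; auto.
  destruct (excluded_middle_informative (face_eq psi ftop)); tauto.
Qed.

Lemma rr_c I psi p : names_set I -> in_space I p -> snd p = 0 -> rrf r I psi p = p.
Proof.
  intros HI Hp Hz; rewrite rr_unfold.
  destruct (excluded_middle_informative (face_eq psi ftop)); auto.
  assert (E : r I p = p) by (apply Hfix; auto).
  cbv zeta; rewrite E. destruct (Req_EM_T (snd p) 0); tauto.
Qed.

Lemma rr_d : forall I psi i b p, names_set I -> In i I ->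
  in_space (remove_name i I) p ->
  rrf r I psi (face_map i b p) = face_map i b (rrf r (remove_name i I) (face_subst i b psi) p).
Proof.
  induction I as [I IH] using len_ind; intros psi i b p HI Hi Hp.
  rewrite (rr_unfold r I psi).
  destruct (excluded_middle_informative (face_eq psi ftop)) as [h|h].
  { rewrite rr_top; auto. apply (face_subst_eq i b) in h. exact h. }
  assert (Hsp' : in_space I (face_map i b p)) by (apply in_space_face; auto).
  assert (E : r I (face_map i b p) = face_map i b p).
  { apply Hfix; auto. left; apply face_map_bd; auto. }
  cbv zeta; rewrite E.
  destruct (Req_EM_T (snd (face_map i b p)) 0) as [z|z].
  { rewrite rr_c; auto. apply names_set_remove; auto. }
  destruct (find_bd I (fst (face_map i b p))) as [[j c]|] eqn:F.
  2: { exfalso; eapply find_bd_none; [exact F|]. apply face_map_bd; auto. }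
  apply find_bd_some in F. destruct F as [Hj Hv].
  assert (Hp0 : fst p i = 0) by (eapply in_space_rem_0; eauto).
  destruct (Nat.eq_dec j i) as [->|Hji].
  - rewrite face_map_at in Hv. assert (c = b) by (destruct b, c; simpl in Hv; auto; lra).
    subst c. rewrite zero_face; auto.
  - rewrite zero_face_comm by auto.
    assert (Hir : In i (remove_name j I)) by (apply In_remove; auto).
    rewrite IH; auto.
    2: apply remove_length; auto.
    2: apply names_set_remove; auto.
    2: { rewrite remove_comm. apply in_space_zero; auto. }
    assert (Hpj : fst p j = bval c).
    { rewrite <- Hv. simpl. apply Nat.eqb_neq in Hji. rewrite Hji; auto. }
    rewrite <- (face_zero j c p) at 2 by auto.
    assert (Hjr : In j (remove_name i I)) by (apply In_remove; auto).
    rewrite (IH (remove_name i I)); auto.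
    2: apply remove_length; auto.
    2: apply names_set_remove; auto.
    2: apply in_space_zero; auto.
    rewrite face_comm by auto.
    rewrite remove_comm, face_subst_comm by auto. reflexivity.
Qed.

Lemma rr_idem : forall I psi p, names_set I -> face_in I psi -> in_space I p ->
  rrf r I psi (rrf r I psi p) = rrf r I psi p.
Proof.
  induction I as [I IH] using len_ind; intros psi p HI Hpsi Hp.
  rewrite (rr_unfold r I psi p).
  destruct (excluded_middle_informative (face_eq psi ftop)) as [h|h].
  { apply rr_top; auto. }
  cbv zeta.
  destruct (Req_EM_T (snd (r I p)) 0) as [z|z].
  { apply rr_c; auto. apply Hsp; auto. }
  destruct (find_bd I (fst (r I p))) as [[j c]|] eqn:F.
  2: { exfalso. pose proof (Hidem I p HI Hp) as E. apply Hfix in E; [|auto|apply Hsp; auto].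
       destruct E as [E|E]; [|tauto]. eapply find_bd_none; eauto. }
  apply find_bd_some in F. destruct F as [Hj Hv].
  assert (Hq : in_space (remove_name j I) (zero_at j (r I p))) by (apply in_space_zero, Hsp; auto).
  rewrite rr_d; auto.
  2: apply rr_space; auto; apply names_set_remove; auto.
  f_equal. apply IH; auto.
  - apply remove_length; auto.
  - apply names_set_remove; auto.
  - apply face_in_subst; auto.
Qed.

Lemma rr_fix : forall I psi p, names_set I -> face_in I psi -> in_space I p ->
  (rrf r I psi p = p <-> face_holds psi (fst p) \/ snd p = 0).
Proof.
  induction I as [I IH] using len_ind; intros psi p HI Hpsi Hp.
  destruct (excluded_middle_informative (face_eq psi ftop)) as [h|h].
  { rewrite rr_top; auto. split; auto. intros _; left.
    apply (face_holds_eq _ _ (fst p)) in h. simpl in h; tauto. }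
  destruct (Req_EM_T (snd p) 0) as [z|z].
  { split; auto. intros _; apply rr_c; auto. }
  split.
  - intros Hfx. left.
    rewrite rr_unfold in Hfx.
    destruct (excluded_middle_informative (face_eq psi ftop)) as [h'|h']; [tauto|].
    cbv zeta in Hfx.
    destruct (Req_EM_T (snd (r I p)) 0) as [z'|z'].
    { rewrite Hfx in z'; tauto. }
    destruct (find_bd I (fst (r I p))) as [[j c]|] eqn:F.
    2: { exfalso. pose proof (Hidem I p HI Hp) as E. apply Hfix in E; [|auto|apply Hsp; auto].
       destruct E as [E|E]; [|tauto]. eapply find_bd_none; eauto. }
    apply find_bd_some in F. destruct F as [Hj Hv].
    assert (HbdP : boundary I (fst p)).
    { rewrite <- Hfx. apply face_map_bd; auto. }
    assert (Er : r I p = p) by (apply Hfix; auto).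
    rewrite Er in Hfx, Hv.
    remember (rrf r (remove_name j I) (face_subst j c psi) (zero_at j p)) as Y eqn:HYd.
    assert (HY : in_space (remove_name j I) Y).
    { rewrite HYd. apply rr_space; [apply names_set_remove; auto|]. apply in_space_zero; auto. }
    assert (EY : Y = zero_at j p).
    { rewrite <- Hfx. rewrite zero_face; auto. eapply in_space_rem_0; eauto. }
    assert (Hh : face_holds (face_subst j c psi) (fst (zero_at j p)) \/ snd (zero_at j p) = 0).
    { apply (IH (remove_name j I)).
      - apply remove_length; auto.
      - apply names_set_remove; auto.
      - apply face_in_subst; auto.
      - apply in_space_zero; auto.
      - rewrite <- HYd; auto. }
    destruct Hh as [Hh|Hh]; [|simpl in Hh; tauto].
    apply face_subst_holds in Hh.
    change (face_holds psi (fst (face_map j c (zero_at j p)))) in Hh.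
    rewrite face_zero in Hh; auto.
  - intros [Hh|Hh]; [|tauto].
    assert (Hbd : boundary I (fst p)).
    { destruct (classic (boundary I (fst p))) as [B|B]; auto. exfalso. apply h.
      eapply face_interior; eauto. intros k Hk. split; intro E; apply B; exists k; auto. }
    assert (Er : r I p = p) by (apply Hfix; auto).
    rewrite rr_unfold.
    destruct (excluded_middle_informative (face_eq psi ftop)) as [h'|h']; [tauto|].
    cbv zeta; rewrite Er.
    destruct (Req_EM_T (snd p) 0) as [z'|z']; [tauto|].
    destruct (find_bd_bd _ _ Hbd) as [j [c F]]. rewrite F.
    apply find_bd_some in F. destruct F as [Hj Hv].
    rewrite <- (face_zero j c p) at 2 by auto. f_equal.
    apply IH; auto.
    + apply remove_length; auto.
    + apply names_set_remove; auto.
    + apply face_in_subst; auto.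
    + apply in_space_zero; auto.
    + left. apply face_subst_holds.
      change (face_holds psi (fst (face_map j c (zero_at j p)))).
      rewrite face_zero; auto.
Qed.



End S.

Theorem mainTheorem5 (r : list nat -> pt -> pt) (Hr : good_r r) :
  exists rr : list nat -> face -> pt -> pt,
    psi_family r rr /\
    (forall rr', psi_family r rr' ->
       forall I psi p, names_set I -> face_in I psi -> in_space I p ->
         rr' I psi p = rr I psi p) /\
    (forall I psi p, names_set I -> face_in I psi -> in_space I p ->
       rr I psi (rr I psi p) = rr I psi p) /\
    (forall I psi p, names_set I -> face_in I psi -> in_space I p ->
       (rr I psi p = p <-> face_holds psi (fst p) \/ snd p = 0)).
Proof.
  exists (rrf r).
  assert (Hfam : psi_family r (rrf r)).
  { split; [|split; [|split; [|split; [|split]]]].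
    - intros; apply rr_space; auto.
    - intros; apply rr_wd; auto.
    - intros; apply rr_top; auto.
    - intros; apply rr_b; auto.
    - intros; apply rr_c; auto.
    - intros; apply rr_d; auto. }
  split; [exact Hfam|]. split; [|split].
  2: intros; apply rr_idem; auto.
  2: intros; apply rr_fix; auto.
  intros rr' [H1 [H2 [Ha [Hb [Hc Hd]]]]].
  induction I as [I IH] using len_ind; intros psi p HI Hpsi Hp.
  destruct (excluded_middle_informative (face_eq psi ftop)) as [h|h].
  { rewrite Ha, rr_top; auto. }
  rewrite Hb, (rr_b r Hr I psi p); auto.
  assert (Hq : in_space I (r I p)) by (apply Hsp; auto).
  destruct (Req_EM_T (snd (r I p)) 0) as [z|z].
  { rewrite Hc, rr_c; auto. }
  assert (Hbd : boundary I (fst (r I p))).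
  { pose proof (Hidem r Hr I p HI Hp) as E. apply (Hfix r Hr) in E; auto. tauto. }
  destruct (find_bd_bd _ _ Hbd) as [j [c F]].
  apply find_bd_some in F. destruct F as [Hj Hv].
  rewrite <- (face_zero j c (r I p)) by auto.
  assert (Hz : in_space (remove_name j I) (zero_at j (r I p))) by (apply in_space_zero; auto).
  rewrite Hd, rr_d; auto.
  f_equal. apply IH; auto.
  - apply remove_length; auto.
  - apply names_set_remove; auto.
  - apply face_in_subst; auto.
Qed.
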